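(* Let $d \geq 1$, let $n_1,\dots,n_d \geq 1$, and let $G_{\mathrm{base}}$ be the unweighted $d$-dimensional grid graph with vertex set $[n_1]\times\cdots\times[n_d]$ (so $L = n_1 \cdots n_d$ vertices), where two vertices are adjacent iff they differ by exactly $1$ in exactly one coordinate. Let $f:\mathbb{N} \to \mathbb{R}$ be arbitrary and define the mask $\mathbf{M}$ indexed by the vertices by $\mathbf{M}_{u,v} = f(\mathrm{dist}_{G_{\mathrm{base}}}(u,v))$, where $\mathrm{dist}_{G_{\mathrm{base}}}$ is the shortest-path distance. Then there exists an ordering of the vertices such that $\mathbf{M}$, written as an $L\times L$ matrix in this ordering, is a $d$-level block-Toeplitz matrix.
   Context: A matrix $\mathbf{M} \in \mathbb{R}^{L\times L}$ is Toeplitz (equivalently, $1$-level block-Toeplitz) if there is $\xi:\mathbb{Z}\to\mathbb{R}$ with $\mathbf{M}_{i,j} = \xi(i-j)$ for all $i,j$. For $d \geq 2$, $\mathbf{M}$ is $d$-level block-Toeplitz if $\mathbf{M} = (\mathbf{B}^{i,j})_{i,j}$ is partitioned into blocks $\mathbf{B}^{i,j}$, each taken from some finite set $\{\mathbf{A}_1,\dots,\mathbf{A}_r\}$ of $(d-1)$-level block-Toeplitz matrices, such that replacing each block $\mathbf{B}^{i,j}$ by the index $k$ of its matrix $\mathbf{A}_k$ yields a Toeplitz matrix. *)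

(* Defs.v *)
From HB Require Import structures.
From mathcomp Require Import all_boot all_order all_algebra.
From mathcomp Require Import reals.
Set Implicit Arguments. Unset Strict Implicit. Unset Printing Implicit Defensive.
Import Order.TTheory GRing.Theory Num.Theory.
Local Open Scope ring_scope.

(* Matrices of size L x L are represented as functions nat -> nat -> R,
   only the entries with indices < L being relevant. Indices start at 0. *)

Definition toeplitz (R : Type) (L : nat) (M : nat -> nat -> R) : Prop :=
  exists xi : int -> R, forall i j : nat, (i < L)%N -> (j < L)%N ->
    M i j = xi (i%:Z - j%:Z).

(* For d >= 2: M is partitioned into m x m blocks of size k x k (L = m * k),
   each block being one of finitely many matrices A_0, ..., A_{r-1}, all
   (d-1)-level block-Toeplitz, and the index matrix (idx i j) is Toeplitz.
   Level 0 is meaningless and set to False. *)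
Fixpoint block_toeplitz (R : Type) (d : nat) (L : nat) (M : nat -> nat -> R)
  {struct d} : Prop :=
  match d with
  | 0 => False
  | d'.+1 =>
    match d' with
    | 0 => toeplitz L M
    | _ =>
      exists (m k r : nat) (A : nat -> nat -> nat -> R) (idx : nat -> nat -> nat),
        [/\ L = (m * k)%N,
            (forall t, (t < r)%N -> block_toeplitz d' k (A t)),
            (forall i j, (i < m)%N -> (j < m)%N -> (idx i j < r)%N),
            toeplitz m idx &
            (forall i j, (i < L)%N -> (j < L)%N ->
               M i j = A (idx (i %/ k) (j %/ k))%N (i %% k)%N (j %% k)%N)]
    end
  end.

(* Grid graph on [n_1] x ... x [n_d], coordinates taken 0-based: v i < n i. *)
Definition vertex (d : nat) := {ffun 'I_d -> nat}.

Definition in_grid (d : nat) (n : 'I_d -> nat) (v : vertex d) : bool :=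
  [forall i, (v i < n i)%N].

Definition grid_adj (d : nat) (n : 'I_d -> nat) (u v : vertex d) : bool :=
  [&& in_grid n u, in_grid n v &
   [exists i, ((u i == (v i).+1) || (v i == (u i).+1)) &&
              [forall j, (j != i) ==> (u j == v j)]]].

(* a walk from u to v in the grid graph, listed by the vertices after u;
   its length is size p *)
Definition grid_walk (d : nat) (n : 'I_d -> nat) (u : vertex d) (p : seq (vertex d))
  (v : vertex d) : bool :=
  in_grid n u && path (grid_adj n) u p && (last u p == v).

Definition grid_dist_is (d : nat) (n : 'I_d -> nat) (u v : vertex d) (k : nat) : Prop :=
  (exists p, grid_walk n u p v /\ size p = k) /\
  (forall p, grid_walk n u p v -> (k <= size p)%N).

(* Main.v *)
Require Import Defs.
From HB Require Import structures.
From mathcomp Require Import all_boot all_order all_algebra.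
From mathcomp Require Import reals.
From mathcomp Require Import zify.
Set Implicit Arguments. Unset Strict Implicit. Unset Printing Implicit Defensive.

Definition absd (x y : nat) : nat := ((x - y) + (y - x))%N.

Fixpoint prodn (ns : seq nat) : nat :=
  match ns with [::] => 1%N | n0 :: ns' => (n0 * prodn ns')%N end.

Fixpoint decode (ns : seq nat) (a : nat) : seq nat :=
  match ns with
  | [::] => [::]
  | n0 :: ns' => (a %/ prodn ns')%N :: decode ns' (a %% prodn ns')%N
  end.

Fixpoint encode (ns xs : seq nat) : nat :=
  match ns, xs with
  | n0 :: ns', x :: xs' => (x * prodn ns' + encode ns' xs')%N
  | _, _ => 0%N
  end.

Fixpoint dl (xs ys : seq nat) : nat :=
  match xs, ys with
  | x :: xs', y :: ys' => (absd x y + dl xs' ys')%N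
  | _, _ => 0%N
  end.

Definition Dd ns a b := dl (decode ns a) (decode ns b).

Lemma bt_ext (R : Type) d L (M M' : nat -> nat -> R) :
  block_toeplitz d L M -> (forall a b, (a < L)%N -> (b < L)%N -> M a b = M' a b) ->
  block_toeplitz d L M'.
Proof.
case: d => [|[|d]] //=.
- case=> xi H E; exists xi => i j Hi Hj; rewrite -E //; exact: H.
- case=> m [k [r [A [idx [H1 H2 H3 H4 H5]]]]] E.
  exists m, k, r, A, idx; split=> // i j Hi Hj; rewrite -E //; exact: H5.
Qed.

Lemma bt_main (R : Type) e : forall ns, size ns = e.+1 -> forall g : nat -> R,
  block_toeplitz e.+1 (prodn ns) (fun a b => g (Dd ns a b)).
Proof.
elim: e => [|e IH] [|n0 ns] //= [Hs] g.
- case: ns Hs => // _ /=.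
  exists (fun z : int => g `|z|%N) => i j _ _.
  rewrite /Dd /= !divn1 addn0 /absd; congr g; lia.
- pose dt t := if (t < n0)%N then t else (t - n0)%N.
  exists n0, (prodn ns), (n0 + n0)%N,
    (fun t a b => g (dt t + Dd ns a b)%N),
    (fun i j => if (j <= i)%N then (i - j)%N else (n0 + (j - i))%N).
  split => //.
  + move=> t _; exact: (IH ns Hs (fun x => g (dt t + x)%N)).
  + move=> i j Hi Hj; case: ifP => _; lia.
  + exists (fun z : int => if (0 <= z)%R then `|z|%N else (n0 + `|z|)%N).
    move=> i j _ _; case: ifP; case: ifP => ? ?; lia.
  + move=> i j Hi Hj.
    have Kp : (0 < prodn ns)%N.
      case: (posnP (prodn ns)) Hi => // ->; by rewrite muln0.
    have Hi' : (i %/ prodn ns < n0)%N by rewrite ltn_divLR.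
    have Hj' : (j %/ prodn ns < n0)%N by rewrite ltn_divLR.
    rewrite /Dd /=; congr g; congr (_ + _)%N.
    move: Hi' Hj'; set x := (i %/ prodn ns)%N; set y := (j %/ prodn ns)%N.
    move=> Hx Hy; rewrite /dt /absd.
    case: (leqP y x) => h.
    * rewrite ifT; lia.
    * rewrite ifF; lia.
Qed.

Lemma decode_size ns a : size (decode ns a) = size ns.
Proof. by elim: ns a => //= n0 ns IH a; rewrite IH. Qed.

Lemma prodn_pos ns a : (a < prodn ns)%N -> forall n0 : nat, True.
Proof. by []. Qed.

Lemma decode_lt ns a : (a < prodn ns)%N ->
  forall i, (i < size ns)%N -> (nth 0 (decode ns a) i < nth 0 ns i)%N.
Proof.
elim: ns a => //= n0 ns IH a Ha i Hi.
have Kp : (0 < prodn ns)%N.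
  case: (posnP (prodn ns)) Ha => // ->; by rewrite muln0.
case: i Hi => [|i] Hi /=.
- by rewrite ltn_divLR.
- apply: IH => //; exact: ltn_pmod.
Qed.

Lemma encode_decode ns a : (a < prodn ns)%N -> encode ns (decode ns a) = a.
Proof.
elim: ns a => /= [|n0 ns IH] a Ha; first by case: a Ha.
have Kp : (0 < prodn ns)%N.
  case: (posnP (prodn ns)) Ha => // ->; by rewrite muln0.
by rewrite IH ?ltn_pmod // -divn_eq.
Qed.

Lemma decode_encode ns xs : size xs = size ns ->
  (forall i, (i < size ns)%N -> (nth 0 xs i < nth 0 ns i)%N) ->
  (encode ns xs < prodn ns)%N /\ decode ns (encode ns xs) = xs.
Proof.
elim: ns xs => [|n0 ns IH] [|x xs] //= [Hs] H.
have [He Hd] := IH xs Hs (fun i hi => H i.+1 hi).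
have Hx : (x < n0)%N by exact: (H 0%N).
have Kp : (0 < prodn ns)%N by case: (prodn ns) He.
split; first by nia.
by rewrite divnMDl // divn_small // addn0 modnMDl modn_small // Hd.
Qed.

Lemma dl_sum d : forall xs ys, size xs = d -> size ys = d ->
  dl xs ys = (\sum_(i < d) absd (nth 0 xs i) (nth 0 ys i))%N.
Proof.
elim: d => [|d IH] [|x xs] [|y ys] //=; rewrite ?big_ord0 //.
move=> [Hx] [Hy]; rewrite big_ord_recl IH //.
Qed.

Lemma prodn_big s : prodn s = (\prod_(x <- s) x)%N.
Proof. by elim: s => [|x s IH]; rewrite ?big_nil ?big_cons //= IH. Qed.

Definition l1 d (u v : vertex d) : nat := (\sum_(i < d) absd (u i) (v i))%N.

Lemma l1_change d (u w v : vertex d) i : (forall j, j != i -> u j = w j) ->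
  (l1 u v + absd (w i) (v i) = l1 w v + absd (u i) (v i))%N.
Proof.
move=> H; rewrite /l1 (bigD1 i) //= [X in _ = X + _](bigD1 i) //=.
have -> : (\sum_(j < d | j != i) absd (u j) (v j) =
           \sum_(j < d | j != i) absd (w j) (v j))%N.
  by apply: eq_bigr => j hj; rewrite H.
rewrite addnAC [RHS]addnAC; congr (_ + _); first exact: addnC.
Qed.

Lemma l1_adj d (n : 'I_d -> nat) (u w v : vertex d) :
  grid_adj n u w -> (l1 u v <= l1 w v + 1)%N.
Proof.
case/and3P => _ _ /existsP [i /andP [Hi /forallP Hj]].
have := @l1_change d u w v i (fun j hj => eqP (implyP (Hj j) hj)).
move: Hi => /orP [] /eqP E; rewrite E /absd; lia.
Qed.

Lemma l1_self d (u : vertex d) : l1 u u = 0%N.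
Proof. by rewrite /l1 big1 // => i _; rewrite /absd subnn. Qed.

Lemma l1_walk d (n : 'I_d -> nat) p : forall (u v : vertex d),
  grid_walk n u p v -> (l1 u v <= size p)%N.
Proof.
elim: p => [|w p IH] u v.
- rewrite /grid_walk /= => /andP [_ /eqP <-]; by rewrite l1_self.
- rewrite /grid_walk /= => /andP [/andP [Hu /andP [Ha Hp]] Hl].
  have Hw : in_grid n w by case/and3P: Ha.
  apply: leq_trans (l1_adj v Ha) _; rewrite addn1 ltnS; apply: IH.
  by rewrite /grid_walk Hw Hp Hl.
Qed.

Lemma l1_ge d (u v : vertex d) i : (absd (u i) (v i) <= l1 u v)%N.
Proof. by rewrite /l1 (bigD1 i) //= leq_addr. Qed.

Lemma absd0 (x y : nat) : (absd x y <= 0)%N -> x = y.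
Proof. rewrite /absd; lia. Qed.

Lemma walk_exists d (n : 'I_d -> nat) (v : vertex d) k : forall u : vertex d,
  in_grid n u -> in_grid n v -> l1 u v = k ->
  exists p, grid_walk n u p v /\ size p = k.
Proof.
elim: k => [|k IH] u Hu Hv Hl.
- have -> : u = v.
    apply/ffunP => i; have := l1_ge u v i; rewrite Hl; exact: absd0.
  exists [::]; by rewrite /grid_walk /= Hv eqxx.
- case: (pickP (fun i => u i != v i)) => [i Hi | H]; last first.
    move: Hl; rewrite /l1 big1 // => j _.
    by move: (H j) => /= /negbFE /eqP ->; rewrite /absd subnn.
  pose w : vertex d := [ffun j => if j == i then
           (if (u i < v i)%N then (u i).+1 else (u i).-1) else u j].
  have Hwo : forall j, j != i -> u j = w j by move=> j hj; rewrite ffunE (negbTE hj).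
  have Hwi : w i = (if (u i < v i)%N then (u i).+1 else (u i).-1) by rewrite ffunE eqxx.
  have Hui : (u i < n i)%N by move/forallP: Hu.
  have Hvi : (v i < n i)%N by move/forallP: Hv.
  have Hw : in_grid n w.
    apply/forallP => j; case: (eqVneq j i) => [-> | hj].
      rewrite Hwi; case: ifP => h; lia.
    by rewrite -Hwo //; move/forallP: Hu.
  have Ha : grid_adj n u w.
    rewrite /grid_adj Hu Hw /=; apply/existsP; exists i; apply/andP; split.
      rewrite Hwi; move: Hi; case: ifP => h hi; apply/orP; [right|left]; apply/eqP; lia.
    by apply/forallP => j; apply/implyP => hj; rewrite Hwo.
  have Hl' : l1 w v = k.
    have := @l1_change d u w v i Hwo; rewrite Hwi Hl /absd.
    move: Hi; case: ifP => h hi; lia.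
  have [p [Hp Hs]] := IH w Hw Hv Hl'.
  exists (w :: p); split; last by rewrite /= Hs.
  move: Hp; rewrite /grid_walk /= Hu Ha => /andP [/andP [_ ->] ->] //.
Qed.

Lemma dist_l1 d (n : 'I_d -> nat) (u v : vertex d) :
  in_grid n u -> in_grid n v -> grid_dist_is n u v (l1 u v).
Proof.
move=> Hu Hv; split; first exact: walk_exists.
by move=> p; apply: l1_walk.
Qed.

Theorem lemma3p3 (R : realType) (d : nat) (n : 'I_d -> nat)
  (f : nat -> R) (M : vertex d -> vertex d -> R) :
  (1 <= d)%N ->
  (forall i, (1 <= n i)%N) ->
  (forall u v k, in_grid n u -> in_grid n v -> grid_dist_is n u v k ->
     M u v = f k) ->
  exists ord : nat -> vertex d,
    [/\ (forall a, (a < \prod_(i < d) n i)%N -> in_grid n (ord a)),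
        (forall a b, (a < \prod_(i < d) n i)%N -> (b < \prod_(i < d) n i)%N ->
           ord a = ord b -> a = b),
        (forall v, in_grid n v -> exists2 a, (a < \prod_(i < d) n i)%N & ord a = v) &
        block_toeplitz d (\prod_(i < d) n i) (fun a b => M (ord a) (ord b))].
Proof.
move=> Hd Hn HM.
pose ns := map n (enum 'I_d).
have Hsize : size ns = d by rewrite size_map size_enum_ord.
have Hnth : forall i : 'I_d, nth 0%N ns i = n i.
  move=> i; rewrite (nth_map i) ?size_enum_ord // nth_ord_enum //.
have HL : (\prod_(i < d) n i)%N = prodn ns by rewrite prodn_big big_map big_enum.
pose ord a : vertex d := [ffun i : 'I_d => nth 0%N (decode ns a) i].
have Hgrid : forall a, (a < prodn ns)%N -> in_grid n (ord a).
  move=> a Ha; apply/forallP => i; rewrite ffunE -Hnth.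
  by apply: decode_lt; rewrite // Hsize ltn_ord.
have Hl1 : forall a b, l1 (ord a) (ord b) = Dd ns a b.
  move=> a b; rewrite /Dd (@dl_sum d) ?decode_size //.
  by apply: eq_bigr => i _; rewrite !ffunE.
exists ord; rewrite HL; split.
- exact: Hgrid.
- move=> a b Ha Hb E.
  rewrite -(encode_decode Ha) -(encode_decode Hb); congr encode.
  apply: (@eq_from_nth _ 0%N); rewrite !decode_size // => i hi.
  rewrite Hsize in hi.
  have := congr1 (fun g : vertex d => g (Ordinal hi)) E; by rewrite !ffunE.
- move=> v Hv.
  pose xs := map v (enum 'I_d).
  have Hxn : forall i : 'I_d, nth 0%N xs i = v i.
    move=> i; rewrite (nth_map i) ?size_enum_ord // nth_ord_enum //.
  have [H1 H2] : (encode ns xs < prodn ns)%N /\ decode ns (encode ns xs) = xs.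
    apply: decode_encode; first by rewrite size_map size_enum_ord Hsize.
    move=> i hi; rewrite Hsize in hi.
    rewrite (Hxn (Ordinal hi)) (Hnth (Ordinal hi)); by move/forallP: Hv.
  exists (encode ns xs) => //.
  by apply/ffunP => i; rewrite ffunE H2 Hxn.
- have := @bt_main R d.-1 ns; rewrite prednK // => /(_ Hsize f) H.
  apply: (bt_ext H) => a b Ha Hb.
  rewrite (HM _ _ (l1 (ord a) (ord b))) ?Hl1 //; try exact: Hgrid.
  rewrite -Hl1; apply: dist_l1; exact: Hgrid.
Qed.
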